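(* The homomorphism $\mathcal{B}_{-1}:B_{2n+1}\to Sp(2n,\mathbb{R})$ lifts to a homomorphism $\widetilde{\mathcal{B}}_{-1}:B_{2n+1}\to\widetilde{Sp}(2n,\mathbb{R})$, i.e. there is a homomorphism $\widetilde{\mathcal{B}}_{-1}$ with $p\circ\widetilde{\mathcal{B}}_{-1}=\mathcal{B}_{-1}$, where $p:\widetilde{Sp}(2n,\mathbb{R})\to Sp(2n,\mathbb{R})$ is the universal covering map.
   Context: $B_{2n+1}$ is the braid group on $2n+1$ strands with standard generators $\sigma_1,\dots,\sigma_{2n}$. Let $\Sigma_n$ be the double cover of the disk branched at $2n+1$ points (a genus $n$ surface with one boundary component); $B_{2n+1}$ acts on $\Sigma_n$ with $\sigma_i$ lifting to a positive Dehn twist about a nonseparating simple closed curve $C_i$, the $C_i$ forming a chain. $\mathcal{B}_{-1}$ is the induced action on $H_1(\Sigma_n,\partial\Sigma_n;\mathbb{R})\cong\mathbb{R}^{2n}$, which preserves the intersection pairing $\omega$ (a symplectic form), so $\mathcal{B}_{-1}$ takes values in $Sp(2n,\mathbb{R})$ (this is the Burau representation at $-1$). Concretely, orienting the $C_i$ so that $\omega(C_i,C_j)=\delta_{i+1,j}-\delta_{i-1,j}$, $\mathcal{B}_{-1}(\sigma_i)(x)=x+\omega(C_i,x)C_i$. $\widetilde{Sp}(2n,\mathbb{R})$ is the universal cover, viewed as homotopy classes rel endpoints of paths in $Sp(2n,\mathbb{R})$ starting at the identity. *)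

(* Defs.v *)
From HB Require Import structures.
From mathcomp Require Import all_boot all_order all_algebra.
From mathcomp Require Import all_classical all_reals all_analysis.
From mathcomp Require Import Rstruct Rstruct_topology.
Set Implicit Arguments. Unset Strict Implicit. Unset Printing Implicit Defensive.
Import Order.TTheory GRing.Theory Num.Theory.
Local Open Scope ring_scope.
Local Open Scope classical_set_scope.

Definition Rr : realType := Rdefinitions.R.

(* Gram matrix of the intersection form omega in the basis C_0,...,C_{m-1}
   (the chain curves; C_{i} here is the paper's C_{i+1}):
   omega(C_i, C_j) = delta_{i+1,j} - delta_{i-1,j}. *)
Definition omega_mx (m : nat) : 'M[Rr]_m :=
  \matrix_(i, j) ((j == i.+1 :> nat)%:R - (i == j.+1 :> nat)%:R).

Definition symplectic (m : nat) (M : 'M[Rr]_m) : Prop :=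
  M^T *m omega_mx m *m M = omega_mx m.

(* B_{-1}(sigma_{i+1}) : x |-> x + omega(C_i, x) C_i, in coordinates. *)
Definition burau_m1 (m : nat) (i : 'I_m) : 'M[Rr]_m :=
  1%:M + delta_mx i i *m omega_mx m.

Definition sp_path (m : nat) (g : Rr -> 'M[Rr]_m) : Prop :=
  (forall i j, {within `[0%R, 1%R], continuous (fun t => g t i j)}) /\
  (forall t, t \in `[0%R, 1%R] -> symplectic (g t)) /\
  g 0 = 1%:M.

Definition sp_homotopic (m : nat) (g h : Rr -> 'M[Rr]_m) : Prop :=
  exists H : Rr -> Rr -> 'M[Rr]_m,
    (forall i j, {within `[0%R, 1%R] `*` `[0%R, 1%R],
                   continuous (fun p : Rr * Rr => H p.1 p.2 i j)}) /\
    (forall s t, s \in `[0%R, 1%R] -> t \in `[0%R, 1%R] -> symplectic (H s t)) /\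
    (forall t, t \in `[0%R, 1%R] -> H 0 t = g t /\ H 1 t = h t) /\
    (forall s, s \in `[0%R, 1%R] -> H s 0 = 1%:M /\ H s 1 = g 1).

(* Group law of the universal cover (on representatives): pointwise product,
   which is homotopic rel endpoints to concatenation. *)
Definition path_mul (m : nat) (g h : Rr -> 'M[Rr]_m) : Rr -> 'M[Rr]_m :=
  fun t => g t *m h t.

Definition path_end (m : nat) (g : Rr -> 'M[Rr]_m) : 'M[Rr]_m := g 1.

(* Main.v *)
Require Import Defs.
From HB Require Import structures.
From mathcomp Require Import all_boot all_order all_algebra.
From mathcomp Require Import all_classical all_reals all_analysis.
From mathcomp Require Import Rstruct Rstruct_topology.
From mathcomp Require Import ring lra zify.
Import Order.TTheory GRing.Theory Num.Theory.
Local Open Scope ring_scope.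
Set Implicit Arguments. Unset Strict Implicit.

Lemma fstc : continuous (fun p : Rr * Rr => p.1).
Proof. move=> p; exact: cvg_fst. Qed.
Lemma sndc : continuous (fun p : Rr * Rr => p.2).
Proof. move=> p; exact: cvg_snd. Qed.
Lemma cD (f g : Rr * Rr -> Rr) : continuous f -> continuous g -> continuous (fun p => f p + g p).
Proof. move=> hf hg p; exact (@continuousD Rr Rr^o _ f g p (hf p) (hg p)). Qed.
Lemma cM (f g : Rr * Rr -> Rr) : continuous f -> continuous g -> continuous (fun p => f p * g p).
Proof. move=> hf hg p; exact (@continuousM Rr _ f g p (hf p) (hg p)). Qed.
Lemma cN (f : Rr * Rr -> Rr) : continuous f -> continuous (fun p => - f p).
Proof. move=> hf p; exact (@continuousN Rr Rr^o _ f p (hf p)). Qed.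
Lemma cC (c : Rr) : continuous (fun p : Rr * Rr => c).
Proof. exact: cst_continuous. Qed.
Ltac contac := repeat first [ apply: cD | apply: cM | apply: cN | exact: fstc | exact: sndc | exact: cC ].
Lemma cD1 (f g : Rr -> Rr) : continuous f -> continuous g -> continuous (fun p => f p + g p).
Proof. move=> hf hg p; exact (@continuousD Rr Rr^o _ f g p (hf p) (hg p)). Qed.
Lemma cM1 (f g : Rr -> Rr) : continuous f -> continuous g -> continuous (fun p => f p * g p).
Proof. move=> hf hg p; exact (@continuousM Rr _ f g p (hf p) (hg p)). Qed.
Lemma cI1 : continuous (fun p : Rr => p).
Proof. move=> p; exact: cvg_id. Qed.

Lemma dmd m (k l k' l' : 'I_m) (A : 'M[Rr]_m) :
  delta_mx k l *m A *m delta_mx k' l' = A l k' *: delta_mx k l'.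
Proof.
rewrite -(mul_delta_mx (0 : 'I_1) k l) -(mul_delta_mx (0 : 'I_1) k' l').
rewrite -!mulmxA (mulmxA (delta_mx 0 l)) -rowE (mulmxA (row l A)) -colE.
rewrite [col _ _]mx11_scalar mulmxA mul_mx_scalar -scalemxAl mul_delta_mx !mxE.
done.
Qed.

Lemma dmdL m p (k l k' l' : 'I_m) (B : 'M[Rr]_(p,m)) (A : 'M[Rr]_m) :
  B *m delta_mx k l *m A *m delta_mx k' l' = A l k' *: (B *m delta_mx k l').
Proof. by rewrite -!mulmxA (mulmxA (delta_mx _ _)) dmd scalemxAr. Qed.

Lemma sAl m n p a (A : 'M[Rr]_(m,n)) (B : 'M[Rr]_(n,p)) : (a *: A) *m B = a *: (A *m B).
Proof. by rewrite scalemxAl. Qed.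
Lemma sAr m n p a (A : 'M[Rr]_(m,n)) (B : 'M[Rr]_(n,p)) : A *m (a *: B) = a *: (A *m B).
Proof. by rewrite scalemxAr. Qed.
Lemma eqR (x y : Rr) : x = y -> x = y. Proof. by []. Qed.
Section S.
Variable m : nat.
Local Notation Om := (omega_mx m).
Definition E (k l : 'I_m) : 'M[Rr]_m := delta_mx k l *m Om.
Lemma EE k l k' l' : E k l *m E k' l' = Om l k' *: E k l'.
Proof. by rewrite /E mulmxA dmd scalemxAl. Qed.
Lemma omT : Om^T = - Om.
Proof. apply/matrixP=> r c; rewrite !mxE; ring. Qed.
Lemma ETr k l : (E k l)^T = - (Om *m delta_mx l k).
Proof. by rewrite /E trmx_mul trmx_delta omT mulNmx. Qed.

Variables i j : 'I_m.
Hypothesis hij : (j : nat) = i.+1.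
Lemma Oii : Om i i = 0. Proof. by rewrite !mxE subrr. Qed.
Lemma Ojj : Om j j = 0. Proof. by rewrite !mxE subrr. Qed.
Lemma Oij : Om i j = 1. Proof. rewrite !mxE hij eqxx. case: eqP => [h|_]; [lia|]. by rewrite subr0. Qed.
Lemma Oji : Om j i = -1. Proof. rewrite !mxE hij eqxx. case: eqP => [h|_]; [lia|]. by rewrite sub0r. Qed.

Definition MM (a b c d : Rr) : 'M[Rr]_m :=
  1%:M + (a *: E i i + b *: E i j + c *: E j i + d *: E j j).
Lemma MM_mul a b c d a' b' c' d' :
  MM a b c d *m MM a' b' c' d' =
  MM (a + a' + (a*c' - b*a')) (b + b' + (a*d' - b*b'))
     (c + c' + (c*c' - d*a')) (d + d' + (c*d' - d*b')).
Proof.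
rewrite /MM mulmxDl mul1mx mulmxDr mulmx1 !mulmxDl !mulmxDr.
rewrite -!scalemxAl -!scalemxAr !EE Oii Ojj Oij Oji.
move: (E i i) (E i j) (E j i) (E j j) => e1 e2 e3 e4.
apply/matrixP => r s; rewrite !mxE; ring.
Qed.

Lemma MM_sympl : forall a b c d : Rr, b - c = a * d - b * c -> symplectic (MM a b c d).
Proof.
move=> a b c d h; rewrite /symplectic /MM.
rewrite linearD /= !linearD /= !linearZ /= trmx1 !ETr.
rewrite /E.
do 3! rewrite ?(mulmxDl, mulmxDr, mul1mx, mulmx1, mulNmx, mulmxN, sAl, sAr, mulmxA, dmdL).
rewrite Oii Ojj Oij Oji.
set F1 := (_ *m delta_mx i i *m _).
set F2 := (_ *m delta_mx i j *m _).
set F3 := (_ *m delta_mx j i *m _).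
set F4 := (_ *m delta_mx j j *m _).
clearbody F1 F2 F3 F4.
apply/matrixP => r s; rewrite !mxE.
have h' : a * d = b - c + b * c by rewrite h; ring.
ring: h'.
Qed.

Lemma MM_ext a b c d a' b' c' d' : a = a' -> b = b' -> c = c' -> d = d' ->
  MM a b c d = MM a' b' c' d'.
Proof. by move=> -> -> -> ->. Qed.
Lemma MM0 : MM 0 0 0 0 = 1%:M.
Proof. by rewrite /MM !scale0r !addr0. Qed.
Lemma MM_entry a b c d r s : MM a b c d r s =
  (r == s)%:R + (a * E i i r s + b * E i j r s + c * E j i r s + d * E j j r s).
Proof. by rewrite !mxE. Qed.
End S.




Definition gam m (k : 'I_m) (t : Rr) : 'M[Rr]_m := 1%:M + t *: E k k.

Lemma gam_entry m (k : 'I_m) t r s : gam k t r s = (r == s)%:R + t * E k k r s.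
Proof. by rewrite !mxE. Qed.

Lemma gam_sympl m (k : 'I_m) t : symplectic (gam k t).
Proof.
rewrite /symplectic /gam.
rewrite [(_ + _)^T]raddfD /= [(_ *: _)^T]linearZ /= trmx1 ETr.
rewrite /E.
do 3! rewrite ?(mulmxDl, mulmxDr, mul1mx, mulmx1, mulNmx, mulmxN, sAl, sAr, mulmxA, dmdL).
have -> : omega_mx m k k = 0 by rewrite !mxE subrr.
set F1 := (_ *m delta_mx k k *m _).
clearbody F1.
apply/matrixP => r s; rewrite !mxE.
ring.
Qed.

Lemma sympl_mul m (A B : 'M[Rr]_m) : symplectic A -> symplectic B -> symplectic (A *m B).
Proof.
rewrite /symplectic => hA hB.
rewrite trmx_mul.
have -> : B^T *m A^T *m omega_mx m *m (A *m B) = B^T *m (A^T *m omega_mx m *m A) *m B by rewrite !mulmxA.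
by rewrite hA.
Qed.

Lemma gamMM m (i j : 'I_m) t : gam i t = MM i j t 0 0 0.
Proof. by rewrite /gam /MM !scale0r !addr0. Qed.
Lemma gamMM' m (i j : 'I_m) t : gam j t = MM i j 0 0 0 t.
Proof. by rewrite /gam /MM !scale0r !add0r. Qed.

Lemma far_mul m (i j : 'I_m) t : (i.+1 < j)%N ->
  gam i t *m gam j t = 1%:M + (t *: E i i + t *: E j j) /\
  gam j t *m gam i t = 1%:M + (t *: E i i + t *: E j j).
Proof.
move=> hf.
have h1 : omega_mx m i j = 0.
  rewrite !mxE; case: eqP => [h|_]; [lia|]; case: eqP => [h|_]; [lia|]; by rewrite subrr.
have h2 : omega_mx m j i = 0.
  rewrite !mxE; case: eqP => [h|_]; [lia|]; case: eqP => [h|_]; [lia|]; by rewrite subrr.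
rewrite /gam !mulmxDl !mul1mx !mulmxDr !mulmx1 -!scalemxAl -!scalemxAr !EE h1 h2 !scale0r !scaler0 !addr0.
split; first by rewrite -addrA [t *: E j j + _]addrC.
by rewrite addrA.
Qed.


Lemma ABA m (i j : 'I_m) (hij : (j : nat) = i.+1) t :
  path_mul (path_mul (gam i) (gam j)) (gam i) t =
  MM i j (t * (2 - t * t)) (t * t) (- (t * t)) t.
Proof.
rewrite /path_mul (gamMM i j) (gamMM' i j) !(MM_mul hij).
apply: MM_ext; ring.
Qed.

Lemma BAB m (i j : 'I_m) (hij : (j : nat) = i.+1) t :
  path_mul (path_mul (gam j) (gam i)) (gam j) t =
  MM i j t (t * t) (- (t * t)) (t * (2 - t * t)).
Proof.
rewrite /path_mul (gamMM i j) (gamMM' i j) !(MM_mul hij).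
apply: MM_ext; ring.
Qed.

Theorem lemma3p3 (n : nat) :
  exists gam : 'I_(2 * n) -> (Rr -> 'M[Rr]_(2 * n)),
    (forall i, sp_path (gam i) /\ path_end (gam i) = burau_m1 i) /\
    (forall i j : 'I_(2 * n), (j : nat) = i.+1 ->
       sp_homotopic (path_mul (path_mul (gam i) (gam j)) (gam i))
                    (path_mul (path_mul (gam j) (gam i)) (gam j))) /\
    (forall i j : 'I_(2 * n), (i.+1 < j)%N ->
       sp_homotopic (path_mul (gam i) (gam j)) (path_mul (gam j) (gam i))).
Proof.
exists (fun k => gam k).
split; [|split].
- move=> k; split; [split; [|split]|].
  + move=> r s; apply: continuous_subspaceT.
    have -> : (fun t => gam k t r s) = (fun t => (r == s)%:R + t * E k k r s).
      by apply: funext => t; rewrite gam_entry.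
    apply: cD1; first exact: cst_continuous.
    apply: cM1; first exact: cI1.
    exact: cst_continuous.
  + move=> t _; exact: gam_sympl.
  + by rewrite /gam scale0r addr0.
  + by rewrite /path_end /gam scale1r /burau_m1 /E.
- move=> i j hij.
  exists (fun s t => MM i j (t * (1 + (1 - s) * (1 - t * t)))
                         (t * t * (1 + s * (1 - s) * (1 - t * t)))
                         (- (t * t)) (t * (1 + s * (1 - t * t)))).
  split; [|split; [|split]].
  + move=> r s; apply: continuous_subspaceT.
    have -> : (fun p : Rr * Rr => MM i j (p.2 * (1 + (1 - p.1) * (1 - p.2 * p.2)))
                         (p.2 * p.2 * (1 + p.1 * (1 - p.1) * (1 - p.2 * p.2)))
                         (- (p.2 * p.2)) (p.2 * (1 + p.1 * (1 - p.2 * p.2))) r s) =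
      (fun p : Rr * Rr => (r == s)%:R + (
         (p.2 * (1 + (1 - p.1) * (1 - p.2 * p.2))) * E i i r s +
         (p.2 * p.2 * (1 + p.1 * (1 - p.1) * (1 - p.2 * p.2))) * E i j r s +
         (- (p.2 * p.2)) * E j i r s +
         (p.2 * (1 + p.1 * (1 - p.2 * p.2))) * E j j r s)).
      by apply: funext => p; rewrite MM_entry.
    contac.
  + move=> s t _ _; apply: (MM_sympl hij); ring.
  + move=> t _; split.
    * rewrite (ABA hij); apply: MM_ext; ring.
    * rewrite (BAB hij); apply: MM_ext; ring.
  + move=> s _; split.
    * rewrite -(MM0 i j); apply: MM_ext; ring.
    * rewrite (ABA hij); apply: MM_ext; ring.
- move=> i j hf.
  exists (fun s t => path_mul (gam i) (gam j) t).
  split; [|split; [|split]].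
  + move=> r s; apply: continuous_subspaceT.
    have -> : (fun p : Rr * Rr => path_mul (gam i) (gam j) p.2 r s) =
      (fun p : Rr * Rr => (r == s)%:R + (p.2 * E i i r s + p.2 * E j j r s)).
      by apply: funext => p; rewrite /path_mul (far_mul p.2 hf).1 !mxE.
    contac.
  + move=> s t _ _; apply: sympl_mul; exact: gam_sympl.
  + move=> t _; split => //.
    by rewrite /path_mul (far_mul t hf).1 (far_mul t hf).2.
  + move=> s _; split => //.
    by rewrite /path_mul /gam !scale0r !addr0 mul1mx.
Qed.
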